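(* Let $\tilde{\bm{w}}_1,\dots,\tilde{\bm{w}}_n\in\mathbb{R}^d$ and let $k\ge1$ be an integer. Suppose there exists a $k$-dimensional subspace $\bm{V}^*\subseteq\mathbb{R}^d$ with $d(\tilde{\bm{w}}_i,\bm{V}^* )\le\epsilon_{acc}$ for all $i\in[n]$. Let $(\bm{X}^*,t^* )$ be an optimal solution of the semidefinite program $\min_{\bm{X},t}\ t$ subject to $\tilde{\bm{w}}_i^\top\bm{X}\tilde{\bm{w}}_i\le t$ for $1\le i\le n$, $0\preceq\bm{X}\preceq I$, $\mathrm{Tr}(\bm{X})=d-k$, and let $\bm{X}^*=\sum_{i=1}^d\lambda_i\bm{u}_i\bm{u}_i^\top$ be an eigendecomposition with orthonormal $\bm{u}_i$ and $0\le\lambda_1\le\cdots\le\lambda_d\le1$. Then for any constant $c>1$ such that $ck$ is an integer with $ck\le d$, the $(ck-1)$-dimensional subspace $\bm{V}'=\mathrm{span}(\bm{u}_1,\dots,\bm{u}_{ck-1})$ satisfies $d(\tilde{\bm{w}}_i,\bm{V}')\le\sqrt{1+\frac{1}{c-1}}\,\epsilon_{acc}$ for all $i\in[n]$. In particular, for $c=2$, $\bm{V}'=\mathrm{span}(\bm{u}_1,\dots,\bm{u}_{2k-1})$ is a $(2k-1)$-dimensional subspace with $d(\tilde{\bm{w}}_i,\bm{V}')\le\sqrt{2}\,\epsilon_{acc}$ for all $i\in[n]$.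
   Context: For a vector $\bm{u}$ and subspace $\bm{F}$, $d(\bm{u},\bm{F})=\min_{\bm{v}\in\bm{F}}\|\bm{u}-\bm{v}\|_2$ is the orthogonal distance. $\preceq$ is the Loewner order on symmetric matrices. *)

(* Defs.v *)
From HB Require Import structures.
From mathcomp Require Import all_boot all_order all_algebra.
From mathcomp Require Import classical_sets reals.
Set Implicit Arguments. Unset Strict Implicit. Unset Printing Implicit Defensive.
Import Order.TTheory GRing.Theory Num.Theory.
Local Open Scope ring_scope.

(* Vectors of R^d are row vectors 'rV[R]_d; a subspace of R^d is the row
   space of a matrix F : 'M[R]_(m, d) (membership: (v <= F)%MS). *)

Definition norm2 {R : realType} {d : nat} (u : 'rV[R]_d) : R :=
  Num.sqrt (\sum_(j < d) u 0 j ^+ 2).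

(* Orthogonal distance d(u, F) = min_{v in F} ||u - v||_2 (written as an
   infimum; the minimum is attained). *)
Definition dist_sub {R : realType} {d m : nat} (u : 'rV[R]_d) (F : 'M[R]_(m, d)) : R :=
  inf [set r : R | exists v : 'rV[R]_d, (v <= F)%MS /\ r = norm2 (u - v)]%classic.

Definition psd {R : realType} {d : nat} (A : 'M[R]_d) : Prop :=
  A^T = A /\ forall v : 'rV[R]_d, 0 <= (v *m A *m v^T) 0 0.

Definition loewner_le {R : realType} {d : nat} (A B : 'M[R]_d) : Prop :=
  psd (B - A).

Definition sdp_feasible {R : realType} {n d : nat} (k : nat)
  (w : 'I_n -> 'rV[R]_d) (X : 'M[R]_d) (t : R) : Prop :=
  (forall i, ((w i) *m X *m (w i)^T) 0 0 <= t) /\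
  loewner_le 0 X /\ loewner_le X 1%:M /\ \tr X = (d - k)%:R.

Definition sdp_optimal {R : realType} {n d : nat} (k : nat)
  (w : 'I_n -> 'rV[R]_d) (X : 'M[R]_d) (t : R) : Prop :=
  sdp_feasible k w X t /\
  forall (X' : 'M[R]_d) (t' : R), sdp_feasible k w X' t' -> t <= t'.

(* Main.v *)
Require Import Defs.
From HB Require Import structures.
From mathcomp Require Import all_boot all_order all_algebra.
From mathcomp Require Import classical_sets reals.
From mathcomp Require Import ring lra.
Import Order.TTheory GRing.Theory Num.Theory.
Set Implicit Arguments. Unset Strict Implicit. Unset Printing Implicit Defensive.
Local Open Scope ring_scope.

Section Aux.
Variable R : realType.

Lemma mmt_diag m d (x : 'M[R]_(m, d)) i : (x *m x^T) i i = \sum_j x i j ^+ 2.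
Proof. rewrite mxE; apply: eq_bigr => j _; by rewrite mxE expr2. Qed.

Lemma mmt_ge0 m d (x : 'M[R]_(m, d)) i : 0 <= (x *m x^T) i i.
Proof. rewrite mmt_diag; apply: sumr_ge0 => j _; exact: sqr_ge0. Qed.

Lemma mmt_eq0 m d (x : 'M[R]_(m, d)) : x *m x^T = 0 -> x = 0.
Proof.
move=> h; apply/matrixP => i j; rewrite mxE.
have := congr1 (fun M : 'M[R]_m => M i i) h; rewrite mmt_diag mxE => /eqP.
rewrite psumr_eq0; last by move=> l _; exact: sqr_ge0.
by move=> /allP /(_ j (mem_index_enum _)) /implyP /(_ isT); rewrite sqrf_eq0 => /eqP.
Qed.

Lemma norm2E d (x : 'rV[R]_d) : norm2 x = Num.sqrt ((x *m x^T) 0 0).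
Proof. by rewrite mmt_diag. Qed.

Lemma mxtrace11 (A : 'M[R]_1) : \tr A = A 0 0.
Proof. by rewrite /mxtrace big_ord1. Qed.


Lemma proj_exists d (Vs : 'M[R]_d) : exists X0 : 'M[R]_d,
  [/\ X0^T = X0, X0 *m X0 = X0, \tr X0 = (d - \rank Vs)%:R &
      forall v : 'rV[R]_d, (v <= Vs)%MS -> v *m X0 = 0].
Proof.
have hBfree := row_base_free Vs; have hBeq := eq_row_base Vs.
move: (row_base Vs) hBfree hBeq => B hBfree hBeq.
set G := B *m B^T.
have Gu : G \in unitmx.
  rewrite -row_free_unit -kermx_eq0; apply/eqP.
  set K := kermx G.
  have hK : K *m G = 0 := mulmx_ker G.
  have : (K *m B) *m (K *m B)^T = 0.
    by rewrite trmx_mul mulmxA -(mulmxA K B) hK mul0mx.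
  move/mmt_eq0 => h; apply: (row_free_inj hBfree).
  by rewrite /= h mul0mx.
have GT : G^T = G by rewrite /G trmx_mul trmxK.
set P := B^T *m invmx G *m B.
have PT : P^T = P.
  by rewrite /P !trmx_mul trmxK trmx_inv GT mulmxA.
have PP : P *m P = P.
  rewrite /P -!mulmxA; congr (_ *m _).
  by rewrite !mulmxA -(mulmxA (invmx G) B) -/G mulVmx // mul1mx.
exists (1%:M - P); split.
- by rewrite linearB /= trmx1 PT.
- by rewrite mulmxBl mul1mx mulmxBr mulmx1 PP subrr subr0.
- rewrite linearB /= mxtrace1 /P -mulmxA mxtrace_mulC -mulmxA mulVmx //.
  by rewrite mxtrace1 natrB // rank_leq_col.
- move=> v; rewrite -hBeq => /submxP [D ->].
  rewrite mulmxBr mulmx1 /P !mulmxA -(mulmxA D B) -/G -(mulmxA D G) mulmxV //.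
  by rewrite mulmx1 subrr.
Qed.

Lemma sym_idem_sq d (X : 'M[R]_d) (x : 'rV[R]_d) : X^T = X -> X *m X = X ->
  (x *m X *m x^T) 0 0 = ((x *m X) *m (x *m X)^T) 0 0.
Proof. by move=> XT XX; rewrite trmx_mul XT mulmxA -(mulmxA x X X) XX. Qed.

Lemma sym_idem_ge0 d (X : 'M[R]_d) (x : 'rV[R]_d) : X^T = X -> X *m X = X ->
  0 <= (x *m X *m x^T) 0 0.
Proof. by move=> XT XX; rewrite sym_idem_sq // mmt_ge0. Qed.

Lemma sym_idem_le d (X : 'M[R]_d) (x : 'rV[R]_d) : X^T = X -> X *m X = X ->
  (x *m X *m x^T) 0 0 <= (x *m x^T) 0 0.
Proof.
move=> XT XX.
have -> : x *m x^T = x *m X *m x^T + x *m (1%:M - X) *m x^T.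
  by rewrite -mulmxDl -mulmxDr addrC subrK mulmx1.
rewrite [fun_of_matrix (_ + _) _ _]mxE lerDl; apply: sym_idem_ge0.
- by rewrite linearB /= trmx1 XT.
- by rewrite mulmxBl mul1mx mulmxBr mulmx1 XX subrr subr0.
Qed.


Lemma quadU d (U : 'M[R]_d) (mu : 'I_d -> R) (w : 'rV[R]_d) :
  (w *m (\sum_(i < d) mu i *: ((row i U)^T *m row i U)) *m w^T) 0 0 =
  \sum_j mu j * ((w *m U^T) 0 j) ^+ 2.
Proof.
rewrite mulmx_sumr mulmx_suml summxE; apply: eq_bigr => j _.
rewrite -scalemxAr -scalemxAl mxE; congr (_ * _).
have -> : w *m ((row j U)^T *m row j U) *m w^T =
          (w *m (row j U)^T) *m (w *m (row j U)^T)^T.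
  by rewrite trmx_mul trmxK !mulmxA.
rewrite mmt_diag big_ord1; congr (_ ^+ 2).
by rewrite !mxE; apply: eq_bigr => l _; rewrite !mxE.
Qed.

Lemma traceU d (U : 'M[R]_d) (mu : 'I_d -> R) : U *m U^T = 1%:M ->
  \tr (\sum_(i < d) mu i *: ((row i U)^T *m row i U)) = \sum_j mu j.
Proof.
move=> hU; rewrite raddf_sum; apply: eq_bigr => j _ /=.
rewrite mxtraceZ mxtrace_mulC mxtrace11.
have -> : (row j U *m (row j U)^T) 0 0 = (U *m U^T) j j.
  by rewrite !mxE; apply: eq_bigr => l _; rewrite !mxE.
by rewrite hU mxE eqxx mulr1.
Qed.

Lemma sqU d (U : 'M[R]_d) (a : 'rV[R]_d) : U *m U^T = 1%:M ->
  (a *m U) *m (a *m U)^T = a *m a^T.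
Proof. by move=> hU; rewrite trmx_mul mulmxA -(mulmxA a U) hU mulmx1. Qed.


Lemma sum_ifconst d m (a b : R) : (m <= d)%N ->
  \sum_(j < d) (if (j < m)%N then a else b) = a *+ m + b *+ (d - m).
Proof.
move=> hmd.
rewrite -(big_mkord xpredT (fun j => if (j < m)%N then a else b)).
rewrite (big_cat_nat (n:=m)) /= ?leq0n //.
rewrite (@eq_big_nat _ _ _ 0 m _ (fun _ => a)); last by move=> j /andP [_ ->].
rewrite (@eq_big_nat _ _ _ m d _ (fun _ => b)); last first.
  by move=> j /andP [hj _]; rewrite ltnNge hj.
by rewrite !sumr_const_nat subn0.
Qed.

Lemma sym_idem_psd d (X : 'M[R]_d) : X^T = X -> X *m X = X -> psd X /\ psd (1%:M - X).
Proof.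
move=> XT XX; split; split => //.
- by move=> v; exact: sym_idem_ge0.
- by rewrite linearB /= trmx1 XT.
- move=> v; apply: sym_idem_ge0.
  + by rewrite linearB /= trmx1 XT.
  + by rewrite mulmxBl mul1mx mulmxBr mulmx1 XX subrr subr0.
Qed.

End Aux.

Unset Implicit Arguments.
Set Strict Implicit.

Theorem theorem5 (R : realType) (n d k : nat) (w : 'I_n -> 'rV[R]_d)
  (eps_acc : R)
  (hk : (1 <= k)%N)
  (hV : exists Vs : 'M[R]_d, \rank Vs = k /\
          forall i : 'I_n, dist_sub (w i) Vs <= eps_acc)
  (Xs : 'M[R]_d) (ts : R)
  (hopt : sdp_optimal k w Xs ts)
  (U : 'M[R]_d) (lam : 'I_d -> R)
  (hU : U *m U^T = 1%:M)
  (hX : Xs = \sum_(i < d) lam i *: ((row i U)^T *m row i U))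
  (hlam0 : forall i, 0 <= lam i)
  (hlam1 : forall i, lam i <= 1)
  (hmono : forall i j : 'I_d, (i <= j)%N -> lam i <= lam j)
  (c : R) (m : nat)
  (hc : 1 < c) (hm : c * k%:R = m%:R) (hmd : (m <= d)%N) :
  let V' : 'M[R]_d := \matrix_(i < d) (if (i < m.-1)%N then row i U else (0 : 'rV[R]_d)) in
  \rank V' = m.-1 /\
  forall i : 'I_n, dist_sub (w i) V' <= Num.sqrt (1 + 1 / (c - 1)) * eps_acc.
Proof.
move=> V'.
case: hopt => [[hw [_ [_ htr]]] hmin].
case: hV => Vs [hrk hdist].
have hkm : (k < m)%N.
  rewrite -(ltr_nat R) -hm.
  have : (0 < k%:R :> R) by rewrite ltr0n.
  move=> hk0; nra.
have hm0 : (0 < m)%N by apply: leq_ltn_trans hkm.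
have hp : (m.-1 < d)%N by rewrite prednK //.
set p := m.-1.
have hV'E : V' = pid_mx p *m U.
  apply/matrixP => i j; rewrite !mxE (bigD1 i) //= big1 => [|l /negbTE hl].
    rewrite !mxE eqxx /=; case: ifP => _; rewrite ?mxE ?mul1r ?mul0r addr0 //.
  have hl' : (nat_of_ord i == nat_of_ord l) = false by rewrite eq_sym; exact: hl.
  by rewrite !mxE hl' /= mul0r.
have Uunit : U \in unitmx by case: (mulmx1_unit hU).
split.
  rewrite hV'E mxrankMfree ?row_free_unit // rank_pid_mx //; exact: ltnW.
have [X0 [X0T X0X htrX0 hker]] := proj_exists Vs.
have [psd0 psd1] := sym_idem_psd X0T X0X.
have key : forall i, Num.sqrt ((w i *m X0 *m (w i)^T) 0 0) <= dist_sub (w i) Vs.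
  move=> i; apply: lb_le_inf.
    by exists (norm2 (w i - 0)); exists 0; split => //; exact: sub0mx.
  move=> r [v [hv ->]]; rewrite norm2E; apply: ler_wsqrtr.
  have -> : (w i *m X0 *m (w i)^T) 0 0 = ((w i - v) *m X0 *m (w i - v)^T) 0 0.
    by rewrite !sym_idem_sq // mulmxBl (hker v hv) subr0.
  exact: sym_idem_le.
have heps : forall i, 0 <= eps_acc /\ (w i *m X0 *m (w i)^T) 0 0 <= eps_acc ^+ 2.
  move=> i; have := le_trans (key i) (hdist i).
  have q0 := sym_idem_ge0 (w i) X0T X0X.
  have s0 := sqrtr_ge0 ((w i *m X0 *m (w i)^T) 0 0).
  have := sqr_sqrtr q0.
  move: s0; set s := Num.sqrt _; set q := fun_of_matrix _ _ _ => s0 hsq hse.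
  split; first exact: le_trans hse.
  rewrite -hsq; nra.
have hts : ts <= eps_acc ^+ 2.
  apply: hmin; split; first by move=> i; case: (heps i) => _ h; exact: h.
  split; first by rewrite /loewner_le subr0.
  split; first exact: psd1.
  by rewrite htrX0 hrk.
have P0 : 'I_d := Ordinal hp.
have hsum : \sum_j lam j = (d - k)%:R by rewrite -htr hX traceU.
set L := lam (Ordinal hp).
have hL : (d - k)%:R <= L *+ m + 1 *+ (d - m).
  rewrite -hsum -sum_ifconst //; apply: ler_sum => j _.
  case: ifP => hj; last exact: hlam1.
  by apply: hmono => /=; rewrite -ltnS prednK.
have hkd : (k <= d)%N by apply: leq_trans (ltnW hkm) hmd.
move: hL; rewrite natrB // natrB // -[L *+ m]mulr_natr => hL.
have hcL : c - 1 <= L * c.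
  have hk0 : (0 < k%:R :> R) by rewrite ltr0n.
  rewrite -hm in hL; nra.
move=> i.
set y := w i *m U^T.
set T := \sum_(j < d) (if (j < p)%N then 0 else y 0 j ^+ 2).
have hT0 : 0 <= T.
  by apply: sumr_ge0 => j _; case: ifP => _ //; exact: sqr_ge0.
have hLT : L * T <= eps_acc ^+ 2.
  apply: le_trans hts; apply: le_trans (hw i); rewrite hX quadU.
  rewrite mulr_sumr; apply: ler_sum => j _.
  case: ifP => hj; first by rewrite mulr0; apply: mulr_ge0 => //; exact: sqr_ge0.
  apply: ler_wpM2r; first exact: sqr_ge0.
  by apply: hmono => /=; rewrite leqNgt hj.
have heps0 : 0 <= eps_acc by case: (heps i).
set a : 'rV[R]_d := \row_j (if (j < p)%N then 0 else y 0 j).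
have hwa : w i - y *m V' = a *m U.
  rewrite {1}(_ : w i = y *m U); last by rewrite /y -mulmxA mulmx1C // mulmx1.
  rewrite hV'E mulmxA -mulmxBl; congr (_ *m U).
  apply/matrixP => i0 j; rewrite (ord1 i0).
  have e : (y *m pid_mx p) 0 j = (if (j < p)%N then y 0 j else 0).
    rewrite [LHS]mxE (bigD1 j) //= big1 => [|l /negbTE hl].
      by rewrite [pid_mx _ _ _]mxE eqxx /= addr0; case: ifP => _; rewrite ?mulr1 ?mulr0.
    have hl' : (nat_of_ord l == nat_of_ord j) = false by exact: hl.
    by rewrite [pid_mx _ _ _]mxE hl' /= mulr0.
  have e2 : (y - y *m pid_mx p) 0 j = y 0 j - (y *m pid_mx p) 0 j by rewrite !mxE.
  have ea : a 0 j = (if (j < p)%N then 0 else y 0 j) by rewrite /a mxE.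
  by rewrite e2 e ea; case: ifP => _; rewrite ?subrr ?subr0.
have hnorm : norm2 (w i - y *m V') = Num.sqrt T.
  rewrite norm2E hwa sqU // mmt_diag; congr (Num.sqrt _); apply: eq_bigr => j _.
  by rewrite mxE; case: ifP => _ //; rewrite expr0n.
apply: le_trans (ge_inf _ _) _.
- exists 0 => r [v [_ ->]]; exact: sqrtr_ge0.
- exists (y *m V'); split; [exact: submxMl | reflexivity].
have hc1 : 0 < c - 1 by rewrite subr_gt0.
have hr : (c - 1) * (1 / (c - 1)) = 1 by rewrite mul1r mulfV // gt_eqF.
have hr0 : 0 < 1 / (c - 1) by rewrite divr_gt0.
move: hr hr0; set r := 1 / (c - 1) => hr hr0.
rewrite hnorm -(ger0_norm heps0) -sqrtr_sqr -sqrtrM; last by lra.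
apply: ler_wsqrtr.
have h1 : (c - 1) * T <= c * eps_acc ^+ 2.
  apply: le_trans (_ : L * c * T <= _); first exact: ler_wpM2r.
  rewrite mulrAC [c * _]mulrC; apply: ler_wpM2r; [lra | exact: hLT].
have h2 : r * ((c - 1) * T) <= r * (c * eps_acc ^+ 2) by apply: ler_wpM2l; lra.
nra.
Qed.
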